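(* Let $i$ be a non-negative integer with $i\not\equiv 2 \pmod 3$, let $k=2i^2+7i+6$ and $m=2k+1$. Then there exists a cyclic DCA$(4,2m+1;2m)$ satisfying P1 and P2 (so these give an infinite family).
   Context: A difference covering array DCA$(k,\eta;n)$ over $\mathbb{Z}_n$ (a cyclic DCA) is an $\eta\times k$ matrix $Q=[q(i,j)]$ with entries in $\mathbb{Z}_n$ such that for every pair of distinct columns $j,j'$ the multiset $\{q(i,j)-q(i,j') : 0\le i\le \eta-1\}$ contains every element of $\mathbb{Z}_n$ at least once. A DCA$(k,n+1;n)$ is taken in normalized form: all entries of its last row (row $n$) and last column (column $k-1$) equal $0$. It satisfies P1 if $0$ occurs at least twice in every column, and P2 if for all distinct columns $j,j'$ with $j\neq k-1\neq j'$, the set $\{q(i,j)-q(i,j') : 0\le i\le n-1\}$ equals $\mathbb{Z}_n\setminus\{0\}$. (Here the letter $k$ in the claim denotes the integer $2i^2+7i+6$, while the first parameter of the DCA is $4$.) *)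

(* Defs.v *)
From mathcomp Require Import all_boot all_order all_algebra.
Set Implicit Arguments. Unset Strict Implicit. Unset Printing Implicit Defensive.
Import GRing.Theory.
Local Open Scope ring_scope.

Definition is_DCA (k eta n : nat) (Q : 'M['Z_n]_(eta, k)) : Prop :=
  forall j j' : 'I_k, j != j' ->
    forall x : 'Z_n, exists r : 'I_eta, Q r j - Q r j' = x.

Definition normalized_DCA (k n : nat) (Q : 'M['Z_n]_(n.+1, k)) : Prop :=
  (forall j : 'I_k, Q ord_max j = 0) /\
  (forall r : 'I_n.+1, forall j : 'I_k, (j : nat) = k.-1 -> Q r j = 0).

Definition DCA_P1 (k eta n : nat) (Q : 'M['Z_n]_(eta, k)) : Prop :=
  forall j : 'I_k, (2 <= #|[set r : 'I_eta | Q r j == 0%R]|)%N.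

Definition DCA_P2 (k n : nat) (Q : 'M['Z_n]_(n.+1, k)) : Prop :=
  forall j j' : 'I_k, j != j' -> (j : nat) != k.-1 -> (j' : nat) != k.-1 ->
    [set Q r j - Q r j' | r in [pred r : 'I_n.+1 | (r < n)%N]] = [set~ (0%R : 'Z_n)].

(* Main.v *)
Require Import Defs.
From mathcomp Require Import all_boot all_order all_algebra.
From mathcomp Require Import zify ring.
Set Implicit Arguments. Unset Strict Implicit. Unset Printing Implicit Defensive.
Import GRing.Theory.
Local Open Scope ring_scope.

Lemma valZ (q a : nat) : val (a%:R : 'I_q.+2) = (a %% q.+2)%N.
Proof. by rewrite Zp_nat. Qed.

Lemma natZ0 (q : nat) : ((q.+2)%:R : 'I_q.+2) = 0.
Proof. by apply: val_inj; rewrite valZ modnn. Qed.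

Definition phi (k q p : nat) (f : bool) (y : 'I_p.+2) : 'I_q.+2 :=
  ((2*k+1) * f + (2*k+2) * y)%N%:R.

Section Phi.
End Phi.

Lemma phiE k q p f (y : 'I_p.+2) :
  phi k q f y = (2*k+1)%N%:R * (f : nat)%:R + (2*k+2)%N%:R * (y : nat)%:R.
Proof. by rewrite /phi natrD !natrM. Qed.

Lemma KM0 k q : q.+2 = (2*(2*k+1))%N ->
  ((2*k+2)%N%:R : 'I_q.+2) * (2*k+1)%N%:R = 0.
Proof.
move=> hq; rewrite -natrM.
have -> : ((2*k+2)*(2*k+1) = q.+2 * (k+1))%N by rewrite hq; ring.
by rewrite natrM natZ0 mul0r.
Qed.

Lemma M20 k q : q.+2 = (2*(2*k+1))%N ->
  ((2*k+1)%N%:R : 'I_q.+2) * 2%N%:R = 0.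
Proof.
move=> hq; rewrite -natrM.
have -> : ((2*k+1)*2 = q.+2)%N by rewrite hq; ring.
by rewrite natZ0.
Qed.

Lemma Kmod k q a : q.+2 = (2*(2*k+1))%N ->
  ((2*k+2)%N%:R : 'I_q.+2) * a%:R = (2*k+2)%N%:R * (a %% (2*k+1))%N%:R.
Proof.
move=> hq; have := KM0 hq; set K := (2*k+2)%N%:R; set M := (2*k+1)%N%:R => hKM.
rewrite {1}(divn_eq a (2*k+1)) natrD natrM -/M mulrDr mulrA.
by rewrite (mulrC _ (a %/ _)%N%:R) -mulrA hKM mulr0 add0r.
Qed.

Lemma Mmod k q a : q.+2 = (2*(2*k+1))%N ->
  ((2*k+1)%N%:R : 'I_q.+2) * a%:R = (2*k+1)%N%:R * (a %% 2)%N%:R.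
Proof.
move=> hq; have := M20 hq; set M := (2*k+1)%N%:R; set T := 2%N%:R => hM.
rewrite {1}(divn_eq a 2) natrD natrM -/T mulrDr mulrA.
by rewrite (mulrC _ (a %/ _)%N%:R) -mulrA hM mulr0 add0r.
Qed.

Lemma phi_sub k q p (f1 f2 : bool) (y1 y2 : 'I_p.+2) :
  q.+2 = (2*(2*k+1))%N -> p.+2 = (2*k+1)%N ->
  phi k q f1 y1 - phi k q f2 y2 = phi k q (f1 (+) f2) (y1 - y2).
Proof.
move=> hq hp; rewrite !phiE.
have HM : (2*k+1)%N%:R * (f1:nat)%:R - (2*k+1)%N%:R * (f2:nat)%:R
   = (2*k+1)%N%:R * (f1 (+) f2 : nat)%:R :> 'I_q.+2.
  case: f1; case: f2 => /=; rewrite ?mulr0 ?subr0 ?subrr ?sub0r //.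
  have h2 := M20 hq; rewrite mulr_natr in h2.
  by apply/eqP; rewrite eq_sym -subr_eq0 opprK -mulr2n mulr1 h2.
have HK : (2*k+2)%N%:R * (y1:nat)%:R - (2*k+2)%N%:R * (y2:nat)%:R
   = (2*k+2)%N%:R * ((y1 - y2)%R : nat)%:R :> 'I_q.+2.
  have hy2 : (y2 <= 2*k+1)%N by rewrite -hp ltnW.
  have -> : ((y1 - y2)%R : nat) = ((y1 + (2*k+1 - y2)) %% (2*k+1))%N.
    by rewrite /= -hp modnDmr.
  rewrite -Kmod // (natrD _ (y1:nat)) mulrDr (natrB _ hy2) mulrBr KM0 // sub0r.
  done.
rewrite -HM -HK; ring.
Qed.

Lemma phi_eq0 k q p (f : bool) (y : 'I_p.+2) :
  q.+2 = (2*(2*k+1))%N -> p.+2 = (2*k+1)%N ->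
  phi k q f y = 0 -> f = false /\ y = 0.
Proof.
move=> hq hp /(congr1 val); rewrite /phi valZ /= => hd.
have hd' : (2*(2*k+1) %| (2*k+1) * f + (2*k+2) * y)%N.
  by rewrite -hq /dvdn; apply/eqP; rewrite hd; case: q hq {hd}.
have hm : (2*k+1 %| (2*k+1) * f + (2*k+2) * y)%N.
  by apply: dvdn_trans hd'; apply: dvdn_mull.
have hy : (2*k+1 %| y)%N.
  have e : ((2*k+1) * f + (2*k+2) * y = (2*k+1) * (f + y) + y)%N by ring.
  by rewrite e dvdn_addr ?dvdn_mulr // in hm.
have y0 : (y = 0 :> nat)%N.
  have : (y < 2*k+1)%N by rewrite -hp.
  case: (posnP y) => // yp ylt; have := dvdn_leq yp hy; lia.
have yz : y = 0 by apply: val_inj; rewrite /= y0.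
split => //; clear hd hm hy; move: hd'; rewrite y0 muln0 addn0.
have h0 : (0 < 2*k+1)%N by rewrite addn1.
case: f => //=; rewrite muln1 => /(dvdn_leq h0); lia.
Qed.

Lemma phi_surj k q p (u : 'I_q.+2) :
  q.+2 = (2*(2*k+1))%N -> p.+2 = (2*k+1)%N ->
  exists f (y : 'I_p.+2), phi k q f y = u.
Proof.
move=> hq hp; set a := (u %/ (2*k+1))%N; set r := (u %% (2*k+1))%N.
exists (odd (a + r)), (r%:R).
have hr : val (r%:R : 'I_p.+2) = r.
  by rewrite valZ hp modn_small // ltn_pmod // addn1.
rewrite phiE hr.
have e2 : (2*k+2 = (2*k+1) + 1)%N by lia.
rewrite e2 (natrD _ (2*k+1) 1).
set M := (2*k+1)%N%:R : 'I_q.+2.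
transitivity (M * (odd (a + r) + r)%N%:R + r%:R); first by rewrite natrD; ring.
rewrite Mmod //.
have -> : ((odd (a + r) + r) %% 2 = a %% 2)%N.
  by rewrite -modn2 modnDml -addnA addnn -muln2 addnC modnMDl.
rewrite -Mmod // /M -natrM -natrD mulnC -divn_eq.
by rewrite natr_Zp.
Qed.


Definition Pm p (t : 'I_p.+2) : bool := ((t : nat) == 0%N) || odd t.

Lemma val1 p : val (1 : 'I_p.+2) = 1%N.
Proof. by rewrite /= modn_small. Qed.

Lemma Pm0 p : Pm (0 : 'I_p.+2). Proof. by []. Qed.
Lemma Pm1 p : Pm (1 : 'I_p.+2). Proof. by rewrite /Pm val1. Qed.

Lemma Pm_alt p (z : 'I_p.+2) : odd p -> z != 0 -> Pm (z + 1) != Pm z.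
Proof.
move=> op nz.
have hz : (0 < z)%N by rewrite lt0n; apply: contra nz => /eqP h; apply/eqP/val_inj.
have hv : val (z + 1) = ((z + 1) %% p.+2)%N by rewrite /= modnDmr.
rewrite /Pm hv (negbTE (_ : (z:nat) != 0%N)) ?lt0n //=.
have zl := ltn_ord z.
case: (ltnP (z + 1) p.+2) => h.
  rewrite modn_small // addn1 /=; case: (odd z) => //.
have -> : (z + 1 = p.+2)%N by lia.
rewrite modnn /=.
have -> : (z : nat) = p.+1 by lia.
by rewrite /= op.
Qed.

Lemma col_gen (T : comUnitRingType) (a c0 c1 s : T) (d0 d1 : T -> bool) :
  a \is a GRing.unit -> c0 - c1 = s * a -> (forall z, d0 z != d1 (z + s)) ->
  forall f y, exists e t, (if e then d1 t else d0 t) = f /\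
     a * t + (if e then c1 else c0) = y.
Proof.
move=> ua hs hd f y; set z := a^-1 * (y - c0).
have h0 : a * z + c0 = y by rewrite /z mulrA mulrV // mul1r subrK.
have h1 : a * (z + s) + c1 = y.
  by rewrite mulrDr (mulrC a s) -hs -h0; ring.
have := hd z; case: (boolP (d0 z == f)) => [/eqP e0 _|].
  by exists false, z.
move=> ne dd; exists true, (z + s); split => //.
by move: ne dd; case: f; case: (d0 z); case: (d1 (z+s)).
Qed.

Lemma pair_gen (T : comUnitRingType) (a c0 c1 s z0 : T) (d0 d1 : T -> bool) :
  a \is a GRing.unit -> c0 - c1 = s * a -> a * z0 + c0 = 0 ->
  (forall z, z != z0 -> d0 z != d1 (z + s)) -> d0 z0 -> d1 (z0 + s) ->
  (forall e t, a * t + (if e then c1 else c0) = 0 -> (if e then d1 t else d0 t)) /\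
  (forall f y, f || (y != 0) -> exists e t, (if e then d1 t else d0 t) = f /\
     a * t + (if e then c1 else c0) = y).
Proof.
move=> ua hs hz hd d0z d1z; split.
  case=> t ht.
    have h1 : a * (z0 + s) + c1 = 0.
      by rewrite mulrDr (mulrC a s) -hs -hz; ring.
    have : a * t = a * (z0 + s) by apply: (addIr c1); rewrite ht h1.
    by move/(mulrI ua) ->.
  have : a * t = a * z0 by apply: (addIr c0); rewrite ht hz.
  by move/(mulrI ua) ->.
move=> f y hfy; set z := a^-1 * (y - c0).
have h0 : a * z + c0 = y by rewrite /z mulrA mulrV // mul1r subrK.
have h1 : a * (z + s) + c1 = y.
  by rewrite mulrDr (mulrC a s) -hs -h0; ring.
case: (eqVneq z z0) => [ez|nz].
  have y0 : y = 0 by rewrite -h0 ez hz.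
  move: hfy; rewrite y0 eqxx orbF => ->.
  by exists false, z; rewrite ez.
have := hd z nz; case: (boolP (d0 z == f)) => [/eqP e0 _|].
  by exists false, z.
move=> ne dd; exists true, (z + s); split => //.
by clear hfy; move: ne dd; case: f; case: (d0 z); case: (d1 (z+s)).
Qed.


Lemma om_facts p w : p.+2 = (w*w+w+1)%N -> coprime p.+2 3 ->
  let om := (w%:R : 'I_p.+2) in
  [/\ om^+2 + om + 1 = 0, om^+3 = 1, om \is a GRing.unit,
      (1 - om) \is a GRing.unit & (1 - om^+2) \is a GRing.unit].
Proof.
move=> hp cop om.
have H1 : om^+2 + om + 1 = 0.
  have e : ((p.+2)%:R : 'I_p.+2) = (w*w+w+1)%N%:R := congr1 (fun n => n%:R) hp.
  by rewrite natZ0 !natrD natrM -expr2 in e.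
have H3 : om^+3 = 1.
  apply/eqP; rewrite -subr_eq0.
  have -> : om^+3 - 1 = (om - 1) * (om^+2 + om + 1) by ring.
  by rewrite H1 mulr0.
have U3 : (3%:R : 'I_p.+2) \is a GRing.unit by have := @unitZpE p.+2 3 isT; rewrite cop.
have E3 : (1 - om) * (1 - om^+2) = 3%:R.
  apply/eqP; rewrite -subr_eq0.
  have -> : (1 - om) * (1 - om^+2) - 3%:R = (om - 2%:R) * (om^+2 + om + 1) by ring.
  by rewrite H1 mulr0.
split => //.
- apply/unitrP; exists (om^+2); split; by rewrite -?exprSr -?exprS H3.
- by move: U3; rewrite -E3 unitrM => /andP[].
- by move: U3; rewrite -E3 unitrM => /andP[].
Qed.

Lemma Pm_negom p w : p.+2 = (w*w+w+1)%N -> odd w ->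
  Pm (- (w%:R : 'I_p.+2)) = false.
Proof.
move=> hp ow.
have hv : val (w%:R : 'I_p.+2) = w by rewrite valZ modn_small // hp; nia.
have h2 : val (- (w%:R : 'I_p.+2)) = (w*w + 1)%N.
  rewrite /= hv hp modn_small; nia.
rewrite /Pm h2 addn1 /= oddM ow /=.
by case: (w*w)%N.
Qed.

Definition aff (T : ringType) (a c0 c1 : T) (e : bool) (t : T) :=
  a * t + (if e then c1 else c0).
Definition sel (T : Type) (d0 d1 : T -> bool) (e : bool) (t : T) :=
  if e then d1 t else d0 t.

Lemma aff_sub (T : ringType) (a c0 c1 a' c0' c1' : T) e t :
  aff a c0 c1 e t - aff a' c0' c1' e t = aff (a - a') (c0 - c0') (c1 - c1') e t.
Proof. by case: e; rewrite /aff mulrBl; rewrite opprD addrACA. Qed.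

Lemma sel_xor (T : Type) (d0 d1 d0' d1' : T -> bool) e t :
  sel d0 d1 e t (+) sel d0' d1' e t =
  sel (fun t => d0 t (+) d0' t) (fun t => d1 t (+) d1' t) e t.
Proof. by case: e. Qed.

Definition Ucol p w (j : nat) : bool -> 'I_p.+2 -> bool :=
  let om := (w%:R : 'I_p.+2) in
  match j with
  | 0 => sel (fun _ => false) (fun _ => true)
  | 1 => sel (fun t => Pm t) (fun t => ~~ Pm (t + 1 - om))
  | _ => sel (fun t => Pm (t + om^+2)) (fun t => ~~ Pm (t + 1))
  end.

Definition Vcol p w (j : nat) : bool -> 'I_p.+2 -> 'I_p.+2 :=
  let om := (w%:R : 'I_p.+2) in
  let lam := om - om^+2 in
  match j with
  | 0 => aff 1 0 0
  | 1 => aff om 0 lam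
  | _ => aff (om^+2) lam 0
  end.

Arguments Ucol : clear implicits.
Arguments Vcol : clear implicits.

Lemma cols_ok p w : p.+2 = (w*w+w+1)%N -> coprime p.+2 3 -> odd w ->
  forall j, (j < 3)%N -> forall f y, exists e t,
    Ucol p w j e t = f /\ Vcol p w j e t = y.
Proof.
move=> hp cop ow j hj.
have [H1 H3 Uom U1 U2] := om_facts hp cop.
set om := (w%:R : 'I_p.+2) in H1 H3 Uom U1 U2.
case: j hj => [|[|[|//]]] _.
- apply: (@col_gen _ 1 0 0 0) => //; [exact: unitr1 | by rewrite subrr mul0r].
- apply: (@col_gen _ om 0 (om - om^+2) (om - 1)) => //.
    rewrite /=; ring.
  move=> z; have -> : z + (om - 1) + 1 - om = z by ring.
  by case: (Pm z).
- apply: (@col_gen _ (om^+2) (om - om^+2) 0 (om^+2 - 1)) => //.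
    by rewrite unitrX.
    apply/eqP; rewrite -subr_eq0.
    have -> : om - om ^+ 2 - 0 - (om ^+ 2 - 1) * om ^+ 2 = - om * (om - 1) * (om^+2 + om + 1) by ring.
    by rewrite H1 mulr0.
  move=> z; have -> : z + (om^+2 - 1) + 1 = z + om^+2 by ring.
  by case: (Pm _).
Qed.

Lemma pairs_ok p w : p.+2 = (w*w+w+1)%N -> coprime p.+2 3 -> odd w -> odd p ->
  forall j j', (j < j')%N -> (j' < 3)%N ->
 (forall e t, Vcol p w j e t - Vcol p w j' e t = 0 ->
     Ucol p w j e t (+) Ucol p w j' e t) /\
 (forall f y, f || (y != 0) -> exists e t,
     Ucol p w j e t (+) Ucol p w j' e t = f /\ Vcol p w j e t - Vcol p w j' e t = y).
Proof.
move=> hp cop ow op j j' hjj hj'.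
have [H1 H3 Uom U1 U2] := om_facts hp cop.
have Pno := Pm_negom hp ow.
set om := (w%:R : 'I_p.+2) in H1 H3 Uom U1 U2 Pno.
have alt := @Pm_alt p.
have fin : forall a c0 c1 s z0 (d0 d1 : 'I_p.+2 -> bool) a1 c01 c11 a2 c02 c12
      (u0 u1 u0' u1' : 'I_p.+2 -> bool),
    a \is a GRing.unit -> (c0 - c1) = s * a -> a * z0 + c0 = 0 ->
    (forall z, z != z0 -> d0 z != d1 (z + s)) -> d0 z0 -> d1 (z0 + s) ->
    (forall t, u0 t (+) u0' t = d0 t) -> (forall t, u1 t (+) u1' t = d1 t) ->
    a = a1 - a2 -> c0 = c01 - c02 -> c1 = c11 - c12 ->
 (forall e t, aff a1 c01 c11 e t - aff a2 c02 c12 e t = 0 -> sel u0 u1 e t (+) sel u0' u1' e t) /\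
 (forall f y, f || (y != 0) -> exists e t,
     sel u0 u1 e t (+) sel u0' u1' e t = f /\ aff a1 c01 c11 e t - aff a2 c02 c12 e t = y).
  move=> a c0 c1 s z0 d0 d1 a1 c01 c11 a2 c02 c12 u0 u1 u0' u1' ua hs hz hd hd0 hd1 e0 e1 ea ec0 ec1.
  have [A B] := pair_gen ua hs hz hd hd0 hd1.
  split.
    by move=> e t; rewrite sel_xor aff_sub -ea -ec0 -ec1 /sel e0 e1; apply: A.
  move=> f y /(B f y) [e [t [h1 h2]]]; exists e, t.
  by rewrite sel_xor aff_sub -ea -ec0 -ec1 /sel e0 e1.
have eo : om^+2 = - om - 1.
  by apply: (addIr (om + 1)); rewrite addrA H1; ring.
case: j' hjj hj' => [|[|[|//]]] //; case: j => [|[|//]] // _ _; rewrite /Ucol /Vcol -/om.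
-
  apply: (fin (1 - om) 0 (- (om - om^+2)) om 0
     (fun t => Pm t) (fun t => Pm (t + 1 - om))).
  + exact: U1.
  + by ring.
  + by rewrite mulr0 addr0.
  + move=> z nz; have -> : z + om + 1 - om = z + 1 by ring.
    by rewrite eq_sym; apply: alt.
  + by [].
  + by have -> : 0 + om + 1 - om = 1 by ring.
  + by move=> t.
  + by move=> t; rewrite addTb negbK.
  + by ring.
  + by ring.
  + by ring.
-
  apply: (fin (1 - om^+2) (- (om - om^+2)) 0 (om^+2) (- om^+2)
     (fun t => Pm (t + om^+2)) (fun t => Pm (t + 1))).
  + exact: U2.
  + have -> : om^+2 * (1 - om^+2) = om^+2 - om * om^+3 by ring.
    by rewrite H3; ring.
  + have -> : (1 - om ^+ 2) * - om ^+ 2 + - (om - om ^+ 2) = om * om^+3 - om by ring.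
    by rewrite H3 mulr1 subrr.
  + move=> z nz; rewrite eq_sym; apply: alt => //.
    apply: contra nz => /eqP h; apply/eqP; rewrite -(addrK (om^+2) z) h sub0r //.
  + by rewrite addNr.
  + by rewrite addNr add0r.
  + by move=> t.
  + by move=> t; rewrite addTb negbK.
  + by ring.
  + by ring.
  + by ring.
-
  apply: (fin (om - om^+2) (0 - (om - om^+2)) (om - om^+2 - 0) (-2) 1
     (fun t => Pm t (+) Pm (t + om^+2))
     (fun t => ~~ Pm (t + 1 - om) (+) ~~ Pm (t + 1))).
  + by rewrite (_ : om - om^+2 = om * (1 - om)) ?unitrM ?Uom ?U1 //; ring.
  + by ring.
  + by ring.
  + move=> z nz.
    have hu : z - 1 != 0.
      by apply: contra nz => /eqP h; apply/eqP; rewrite -(subrK 1 z) h add0r.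
    rewrite eo.
    have -> : z + (- om - 1) = z - 1 - om by ring.
    have -> : z + -2 + 1 - om = z - 1 - om by ring.
    have -> : z + -2 + 1 = z - 1 by ring.
    rewrite -{1}(subrK 1 z).
    move: (alt _ op hu); case: (Pm (z - 1 + 1)); case: (Pm (z - 1 - om)); by case: (Pm (z - 1)).
  + rewrite eo (_ : 1 + (- om - 1) = - om) ?Pno ?Pm1 //; ring.
  + rewrite (_ : 1 + -2 + 1 - om = - om) ?Pno; last by ring.
    by rewrite (_ : 1 + -2 + 1 = 0); last by ring.
  + by [].
  + by [].
  + by ring.
  + by ring.
  + by ring.
Qed.


Lemma assembly k p (U : nat -> bool -> 'I_p.+2 -> bool) (V : nat -> bool -> 'I_p.+2 -> 'I_p.+2) :
  p.+2 = (2*k+1)%N ->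
  (forall j, (j < 3)%N -> forall f y, exists e t, U j e t = f /\ V j e t = y) ->
  (forall j j', (j < j')%N -> (j' < 3)%N ->
    (forall e t, V j e t - V j' e t = 0 -> U j e t (+) U j' e t) /\
    (forall f y, f || (y != 0) -> exists e t, U j e t (+) U j' e t = f /\ V j e t - V j' e t = y)) ->
  exists Q : 'M['Z_(2 * (2*k+1))]_((2 * (2*k+1)).+1, 4),
    [/\ is_DCA Q, normalized_DCA Q, DCA_P1 Q & DCA_P2 Q].
Proof.
move=> hp hcol hpair.
set m := (2*k+1)%N; set n := (2 * m)%N.
have n1 : (1 < n)%N by rewrite /n /m; lia.
set q := Zp_trunc n.
have hq : q.+2 = (2*(2*k+1))%N by rewrite /q Zp_cast.
pose er (r : 'I_n.+1) := (m <= r)%N.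
pose tr (r : 'I_n.+1) := ((r %% m)%N%:R : 'I_p.+2).
pose ent j (r : 'I_n.+1) : 'I_q.+2 := phi k q (U j (er r) (tr r)) (V j (er r) (tr r)).
pose Q : 'M['Z_n]_(n.+1, 4) :=
  \matrix_(r, j) if ((r < n)%N && (j < 3)%N) then ent (j : nat) r else 0.
have Qin : forall (r : 'I_n.+1) (j : 'I_4), (r < n)%N -> (j < 3)%N -> Q r j = ent j r.
  by move=> r j hr hj; rewrite mxE hr hj.
have Qout : forall (r : 'I_n.+1) (j : 'I_4), ~~ ((r < n)%N && (j < 3)%N) -> Q r j = 0.
  by move=> r j h; rewrite mxE (negbTE h).
have enc : forall e t, exists r : 'I_n.+1, [/\ (r < n)%N, er r = e & tr r = t].
  move=> e t; have tl : (t < m)%N by rewrite /m -hp ltn_ord.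
  have hl : (e * m + t < n.+1)%N by rewrite /n; case: e => /=; lia.
  exists (inord (e * m + t)); rewrite /er /tr inordK //; clear hl; split.
  - rewrite /n; case: e => /=; lia.
  - case: e => /=; lia.
  - by rewrite modnMDl modn_small // natr_Zp.
have F1 : forall (j : 'I_4), (j < 3)%N -> forall x, exists r : 'I_n.+1, (r < n)%N /\ Q r j = x.
  move=> j hj x; have [f [y hfy]] := phi_surj x hq hp.
  have [e [t [h1 h2]]] := hcol j hj f y.
  have [r [hr h3 h4]] := enc e t.
  by exists r; split => //; rewrite Qin // /ent h3 h4 h1 h2.
have F2nz : forall (j j' : 'I_4) (r : 'I_n.+1), (j < j')%N -> (j' < 3)%N -> (r < n)%N ->
    Q r j - Q r j' != 0.
  move=> j j' r hjj hj' hr; have hj : (j < 3)%N by lia.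
  rewrite !Qin // /ent phi_sub //; apply/eqP => /(phi_eq0 hq hp) [h1 h2].
  by have := (hpair j j' hjj hj').1 _ _ h2; rewrite h1.
have F2s : forall (j j' : 'I_4) x, (j < j')%N -> (j' < 3)%N -> x != 0 ->
    exists r : 'I_n.+1, (r < n)%N /\ Q r j - Q r j' = x.
  move=> j j' x hjj hj' hx; have hj : (j < 3)%N by lia.
  have [f [y hfy]] := phi_surj x hq hp.
  have fy : f || (y != 0).
    apply: contraR hx; rewrite negb_or negbK => /andP[/negbTE fF /eqP y0].
    by rewrite -hfy fF y0 /phi /= !muln0 addn0.
  have [e [t [h1 h2]]] := (hpair j j' hjj hj').2 f y fy.
  have [r [hr h3 h4]] := enc e t.
  by exists r; split => //; rewrite !Qin // /ent phi_sub // h3 h4 h1 h2.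
have G2nz : forall (j j' : 'I_4) (r : 'I_n.+1), j != j' -> (j < 3)%N -> (j' < 3)%N -> (r < n)%N ->
    Q r j - Q r j' != 0.
  move=> j j' r hne hj hj' hr; case: (ltngtP j j') => h.
  - exact: F2nz.
  - by rewrite -opprB oppr_eq0; apply: F2nz.
  - by rewrite (val_inj h) eqxx in hne.
have G2s : forall (j j' : 'I_4) x, j != j' -> (j < 3)%N -> (j' < 3)%N -> x != 0 ->
    exists r : 'I_n.+1, (r < n)%N /\ Q r j - Q r j' = x.
  move=> j j' x hne hj hj' hx; case: (ltngtP j j') => h.
  - exact: F2s.
  - have nx : - x != 0 by rewrite oppr_eq0.
    have [r [hr e]] := F2s j' j (- x) h hj nx.
    by exists r; split => //; rewrite -opprB e opprK.
  - by rewrite (val_inj h) eqxx in hne.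
have Qmax : forall (j : 'I_4), Q ord_max j = 0.
  by move=> j; apply: Qout; rewrite /= ltnn.
exists Q; split.
- move=> j j' hne x.
  case hj: (j < 3)%N; case hj': (j' < 3)%N.
  + case x0: (x == 0).
      by exists ord_max; rewrite !Qmax subrr (eqP x0).
    by have [r [_ e]] := G2s j j' x hne hj hj' (negbT x0); exists r.
  + have [r [_ e]] := F1 j hj x; exists r.
    by rewrite (Qout r j') ?hj' ?andbF // subr0.
  + have [r [_ e]] := F1 j' hj' (- x); exists r.
    by rewrite (Qout r j) ?hj ?andbF // e sub0r opprK.
  + have hv : (j : nat) = j'.
      by move: (ltn_ord j) (ltn_ord j') (negbT hj) (negbT hj'); lia.
    by rewrite (val_inj hv) eqxx in hne.
- split; first exact: Qmax.
  by move=> r j hj; apply: Qout; rewrite hj /= andbF.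
- move=> j.
  have [r0 [hr0 e0]] : exists r0 : 'I_n.+1, (r0 < n)%N /\ Q r0 j = 0.
    case hj: (j < 3)%N; first exact: F1.
    by exists ord0; split; [rewrite /=; lia | apply: Qout; rewrite hj andbF].
  have ne : r0 != ord_max.
    by apply/eqP => h; move: hr0; rewrite h /= ltnn.
  have := subset_leq_card (_ : [set r0; ord_max] \subset [set r | Q r j == 0]).
  rewrite cards2 ne; apply.
  apply/subsetP => r; rewrite !inE => /orP[/eqP -> | /eqP ->].
    by rewrite e0.
  by rewrite Qmax.
- move=> j j' hne hj hj'.
  have hj3 : (j < 3)%N by move: (ltn_ord j) hj => /=; lia.
  have hj3' : (j' < 3)%N by move: (ltn_ord j') hj' => /=; lia.
  apply/setP => x; rewrite !inE; apply/imsetP/idP.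
    by case=> r hr ->; apply: G2nz.
  move=> hx; have [r [hr e]] := G2s j j' x hne hj3 hj3' hx.
  by exists r.
Qed.


Local Close Scope ring_scope.

Theorem mainTheorem19 (i : nat) :
  i %% 3 != 2 ->
  let k := 2 * i ^ 2 + 7 * i + 6 in
  let m := 2 * k + 1 in
  exists Q : 'M['Z_(2 * m)]_((2 * m).+1, 4),
    [/\ is_DCA Q, normalized_DCA Q, DCA_P1 Q & DCA_P2 Q].
Proof.
move=> hi k m.
set p := (2*k+1).-2.
have hp : p.+2 = (2*k+1)%N by rewrite /p /k; lia.
set w := (2*i+3)%N.
have hw : p.+2 = (w*w + w + 1)%N by rewrite hp /k /w; ring.
have cop : coprime p.+2 3.
  rewrite hw coprime_sym prime_coprime //.
  have -> : (w*w + w + 1 = (i+1)^2 + 3 * (i^2 + 4*i + 4))%N by rewrite /w; ring.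
  rewrite (dvdn_addl _ (dvdn_mulr _ (dvdnn 3))) Euclid_dvdX // andbT /dvdn.
  by move: hi; lia.
have ow : odd w by rewrite /w oddD oddM.
have op : odd p.
  have : odd p.+2 by rewrite hp oddD oddM.
  by rewrite /= negbK.
exact: (assembly hp (cols_ok hw cop ow) (pairs_ok hw cop ow op)).
Qed.
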